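(* Let $T=(\{T_g\}_{g\in G},\{\gamma_{g,h}\}_{g,h\in G},u)$ be an action of a group $G$ on a semigroupal category $\mathcal{C}$, let $\mathcal{I}$ be an ideal of $\mathcal{C}$, and for each $g\in G$ put $\mathcal{C}_g=\mathcal{I}\cap\overline{T_g(\mathcal{I})}$. Then (1) $\mathcal{C}_e=\mathcal{I}$; (2) $T_g(\mathcal{C}_{g^{-1}}\cap\mathcal{C}_h)\subseteq\mathcal{C}_g\cap\mathcal{C}_{gh}$ for all $g,h\in G$; (3) $\overline{T_g(\mathcal{C}_{g^{-1}}\cap\mathcal{C}_h)}=\mathcal{C}_g\cap\mathcal{C}_{gh}$ for all $g,h\in G$.
   Context: A semigroupal category is a (strict) category with a tensor product functor and associator satisfying the pentagon axiom. An action of a group $G$ (unit $e$) on $\mathcal{C}$ consists of semigroupal auto-equivalences $T_g$ of $\mathcal{C}$, natural isomorphisms of semigroupal functors $\gamma_{g,h}\colon T_gT_h\Rightarrow T_{gh}$ and $u\colon\mathrm{Id}_{\mathcal{C}}\Rightarrow T_e$, with $(\gamma_{gh,k})_X\circ(\gamma_{g,h})_{T_k(X)}=(\gamma_{g,hk})_X\circ T_g((\gamma_{h,k})_X)$, and with $u_{T_g(X)}$, $(\gamma_{e,g})_X$ mutually inverse and $T_g(u_X)$, $(\gamma_{g,e})_X$ mutually inverse. For a subcategory $\mathcal{D}$, $\overline{\mathcal{D}}$ denotes the smallest subcategory of $\mathcal{C}$ containing $\mathcal{D}$ and closed under isomorphisms (with each of its objects $X$ and each isomorphism $\varphi\colon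 X\to X'$ in $\mathcal{C}$, it contains $X'$ and $\varphi$). An ideal of $\mathcal{C}$ is a subcategory closed under isomorphisms such that $X\otimes Y$ and $Y\otimes X$ are objects of it whenever $X$ is an object of it and $Y$ is any object of $\mathcal{C}$. Intersections of subcategories are taken on objects and morphisms; $T_g(\mathcal{D})$ is the image subcategory. *)

(* Defs.v *)
Set Implicit Arguments.
Unset Strict Implicit.

Record Group := {
  gcar :> Type;
  gmul : gcar -> gcar -> gcar;
  gone : gcar;
  ginv : gcar -> gcar;
  gmulA : forall a b c, gmul a (gmul b c) = gmul (gmul a b) c;
  gmul1l : forall a, gmul gone a = a;
  gmul1r : forall a, gmul a gone = a;
  gmulVl : forall a, gmul (ginv a) a = gone;
  gmulVr : forall a, gmul a (ginv a) = gone }.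

Record Category := {
  ob :> Type;
  hom : ob -> ob -> Type;
  comp : forall X Y Z, hom Y Z -> hom X Y -> hom X Z;
  idm : forall X, hom X X;
  compA : forall X Y Z W (h : hom Z W) (g : hom Y Z) (f : hom X Y),
      comp h (comp g f) = comp (comp h g) f;
  comp1l : forall X Y (f : hom X Y), comp (idm Y) f = f;
  comp1r : forall X Y (f : hom X Y), comp f (idm X) = f }.

Arguments hom {c} _ _.
Arguments comp {c X Y Z} _ _.
Arguments idm {c} _.

Definition is_iso (C : Category) (X Y : C) (f : hom X Y) : Prop :=
  exists g : hom Y X, comp g f = idm X /\ comp f g = idm Y.

Record Functor (C : Category) := {
  fob :> C -> C;
  fmap : forall X Y, hom X Y -> hom (fob X) (fob Y);
  fmap_id : forall X, fmap (idm X) = idm (fob X);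
  fmap_comp : forall X Y Z (g : hom Y Z) (f : hom X Y),
      fmap (comp g f) = comp (fmap g) (fmap f) }.
Arguments fmap {C} _ {X Y} _.

Definition nat_iso (C : Category) (F G : C -> C)
  (Fm : forall X Y, hom X Y -> hom (F X) (F Y))
  (Gm : forall X Y, hom X Y -> hom (G X) (G Y))
  (eta : forall X, hom (F X) (G X)) : Prop :=
  (forall X Y (f : hom X Y), comp (eta Y) (Fm X Y f) = comp (Gm X Y f) (eta X)) /\
  (forall X, is_iso (eta X)).

Definition is_equivalence (C : Category) (F : Functor C) : Prop :=
  exists (H : Functor C)
         (eps : forall X, hom (H (F X)) X) (eta : forall X, hom (F (H X)) X),
    @nat_iso C (fun X => H (F X)) (fun X => X)
            (fun X Y f => fmap H (fmap F f)) (fun X Y f => f) eps /\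
    @nat_iso C (fun X => F (H X)) (fun X => X)
            (fun X Y f => fmap F (fmap H f)) (fun X Y f => f) eta.

Record SemigroupalCategory := {
  scat :> Category;
  tens : scat -> scat -> scat;
  tensm : forall X X' Y Y', hom X X' -> hom Y Y' -> hom (tens X Y) (tens X' Y');
  tensm_id : forall X Y, tensm (idm X) (idm Y) = idm (tens X Y);
  tensm_comp : forall X X' X'' Y Y' Y'' (f' : hom X' X'') (f : hom X X')
      (g' : hom Y' Y'') (g : hom Y Y'),
      tensm (comp f' f) (comp g' g) = comp (tensm f' g') (tensm f g);
  assoc : forall X Y Z, hom (tens (tens X Y) Z) (tens X (tens Y Z));
  assoc_iso : forall X Y Z, is_iso (assoc X Y Z);
  assoc_nat : forall X X' Y Y' Z Z' (f : hom X X') (g : hom Y Y') (h : hom Z Z'),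
      comp (assoc X' Y' Z') (tensm (tensm f g) h)
      = comp (tensm f (tensm g h)) (assoc X Y Z);
  pentagon : forall W X Y Z,
      comp (assoc W X (tens Y Z)) (assoc (tens W X) Y Z)
      = comp (tensm (idm W) (assoc X Y Z))
          (comp (assoc W (tens X Y) Z) (tensm (assoc W X Y) (idm Z))) }.

Arguments tens {s} _ _.
Arguments tensm {s X X' Y Y'} _ _.
Arguments assoc {s} _ _ _.

Record SgFunctor (C : SemigroupalCategory) := {
  sgf :> Functor C;
  sgJ : forall X Y : C, hom (tens (sgf X) (sgf Y)) (sgf (tens X Y));
  sgJ_iso : forall X Y, is_iso (sgJ X Y);
  sgJ_nat : forall X X' Y Y' (f : hom X X') (g : hom Y Y'),
      comp (sgJ X' Y') (tensm (fmap sgf f) (fmap sgf g))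
      = comp (fmap sgf (tensm f g)) (sgJ X Y);
  sgJ_assoc : forall X Y Z,
      comp (fmap sgf (assoc X Y Z)) (comp (sgJ (tens X Y) Z) (tensm (sgJ X Y) (idm (sgf Z))))
      = comp (sgJ X (tens Y Z)) (comp (tensm (idm (sgf X)) (sgJ Y Z))
                                      (assoc (sgf X) (sgf Y) (sgf Z))) }.
Arguments sgJ {C} s X Y.

Definition sg_nat_iso (C : SemigroupalCategory) (F G : C -> C)
  (Fm : forall X Y, hom X Y -> hom (F X) (F Y))
  (Gm : forall X Y, hom X Y -> hom (G X) (G Y))
  (JF : forall X Y, hom (tens (F X) (F Y)) (F (tens X Y)))
  (JG : forall X Y, hom (tens (G X) (G Y)) (G (tens X Y)))
  (eta : forall X, hom (F X) (G X)) : Prop :=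
  nat_iso Fm Gm eta /\
  (forall X Y, comp (eta (tens X Y)) (JF X Y) = comp (JG X Y) (tensm (eta X) (eta Y))).

Definition cast_tgt (C : Category) (X Y Y' : C) (e : Y = Y') (f : hom X Y) : hom X Y' :=
  match e in _ = w return hom X w with eq_refl => f end.

Definition mutually_inverse (C : Category) (X Y : C) (f : hom X Y) (g : hom Y X) : Prop :=
  comp g f = idm X /\ comp f g = idm Y.

Record GroupAction (G : Group) (C : SemigroupalCategory) := {
  act : G -> SgFunctor C;
  act_equiv : forall g, is_equivalence (act g);
  gam : forall (g h : G) (X : C), hom (act g (act h X)) (act (gmul g h) X);
  unt : forall X : C, hom X (act (gone G) X);
  (* gamma_{g,h} : T_g T_h => T_{gh} is a natural iso of semigroupal functors,
     T_g T_h carrying the composite structure T_g(J^h) o J^g *)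
  gam_sg_iso : forall g h : G,
      @sg_nat_iso C (fun X => act g (act h X)) (act (gmul g h))
        (fun X Y f => fmap (act g) (fmap (act h) f))
        (fun X Y f => fmap (act (gmul g h)) f)
        (fun X Y => comp (fmap (act g) (sgJ (act h) X Y)) (sgJ (act g) (act h X) (act h Y)))
        (sgJ (act (gmul g h)))
        (gam g h);
  unt_sg_iso :
      @sg_nat_iso C (fun X => X) (act (gone G))
        (fun X Y f => f) (fun X Y f => fmap (act (gone G)) f)
        (fun X Y => idm (tens X Y)) (sgJ (act (gone G))) unt;
  gam_cocycle : forall (g h k : G) (X : C),
      comp (gam (gmul g h) k X) (gam g h (act k X))
      = cast_tgt (f_equal (fun w => act w X) (gmulA g h k))
          (comp (gam g (gmul h k) X) (fmap (act g) (gam h k X)));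
  unit_left : forall (g : G) (X : C),
      mutually_inverse (unt (act g X))
        (cast_tgt (f_equal (fun w => act w X) (gmul1l g)) (gam (gone G) g X));
  unit_right : forall (g : G) (X : C),
      mutually_inverse (fmap (act g) (unt X))
        (cast_tgt (f_equal (fun w => act w X) (gmul1r g)) (gam g (gone G) X)) }.

Arguments act {G C} _ _.

Definition Mor (C : Category) := { X : C & { Y : C & hom X Y } }.
Definition mkMor (C : Category) (X Y : C) (f : hom X Y) : Mor C :=
  existT _ X (existT _ Y f).
Definition src (C : Category) (m : Mor C) : C := projT1 m.
Definition tgt (C : Category) (m : Mor C) : C := projT1 (projT2 m).

Record subcat (C : Category) := { sob : C -> Prop; smor : Mor C -> Prop }.
Arguments sob {C} _ _.
Arguments smor {C} _ _.

Definition is_subcat (C : Category) (D : subcat C) : Prop :=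
  (forall m, smor D m -> sob D (src m) /\ sob D (tgt m)) /\
  (forall X, sob D X -> smor D (mkMor (idm X))) /\
  (forall X Y Z (g : hom Y Z) (f : hom X Y),
      smor D (mkMor f) -> smor D (mkMor g) -> smor D (mkMor (comp g f))).

Definition closed_iso (C : Category) (D : subcat C) : Prop :=
  forall X X' (phi : hom X X'), sob D X -> is_iso phi ->
    sob D X' /\ smor D (mkMor phi).

Definition incl (C : Category) (D E : subcat C) : Prop :=
  (forall X, sob D X -> sob E X) /\ (forall m, smor D m -> smor E m).

Definition eq_sub (C : Category) (D E : subcat C) : Prop := incl D E /\ incl E D.

Definition inter (C : Category) (D E : subcat C) : subcat C :=
  {| sob X := sob D X /\ sob E X; smor m := smor D m /\ smor E m |}.

(** overline D : the smallest subcategory containing D and closed under isos *)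
Definition closure (C : Category) (D : subcat C) : subcat C :=
  {| sob X := forall S, is_subcat S -> closed_iso S -> incl D S -> sob S X;
     smor m := forall S, is_subcat S -> closed_iso S -> incl D S -> smor S m |}.

Definition fmor (C : Category) (F : Functor C) (m : Mor C) : Mor C :=
  mkMor (fmap F (projT2 (projT2 m))).

Definition image (C : Category) (F : Functor C) (D : subcat C) : subcat C :=
  {| sob X := exists X0, sob D X0 /\ F X0 = X;
     smor m := exists m0, smor D m0 /\ fmor F m0 = m |}.

Definition is_ideal (C : SemigroupalCategory) (I : subcat C) : Prop :=
  is_subcat I /\ closed_iso I /\
  (forall X Y : C, sob I X -> sob I (tens X Y) /\ sob I (tens Y X)).

(* Main.v *)
Require Import Defs.
From Stdlib Require Import Setoid.
Set Implicit Arguments.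
Unset Strict Implicit.

Lemma fmor_mk (C : Category) (F : Functor C) (X Y : C) (f : hom X Y) :
  fmor F (mkMor f) = mkMor (fmap F f).
Proof. reflexivity. Qed.

Lemma fmap_iso (C : Category) (F : Functor C) (X Y : C) (f : hom X Y) :
  is_iso f -> is_iso (fmap F f).
Proof.
  intros [g [H1 H2]]. exists (fmap F g).
  rewrite <- !fmap_comp, H1, H2, !fmap_id. split; reflexivity.
Qed.

Lemma transport (C : Category) (S : subcat C) (hS : is_subcat S) (hc : closed_iso S)
  (F G : C -> C) Fm Gm eta (H : @nat_iso C F G Fm Gm eta) :
  (forall X, sob S (F X) <-> sob S (G X)) /\
  (forall X Y f, smor S (mkMor (Fm X Y f)) <-> smor S (mkMor (Gm X Y f))).
Proof.
  destruct H as [Hn Hi].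
  destruct hS as [Hsm [Hid Hcomp]].
  assert (Hob : forall X, sob S (F X) <-> sob S (G X)).
  { intro X. destruct (Hi X) as [g [H1 H2]]. split; intro HX.
    - exact (proj1 (hc _ _ (eta X) HX (Hi X))).
    - refine (proj1 (hc _ _ g HX _)). exists (eta X); split; assumption. }
  split; [exact Hob|].
  intros X Y f. destruct (Hi X) as [gX [HX1 HX2]]. destruct (Hi Y) as [gY [HY1 HY2]].
  split; intro Hf.
  - destruct (Hsm _ Hf) as [HsX HsY]. cbn in HsX, HsY.
    assert (HGX : sob S (G X)) by (apply Hob; exact HsX).
    assert (hinv : smor S (mkMor gX)).
    { refine (proj2 (hc _ _ gX HGX _)). exists (eta X); split; assumption. }
    assert (heta : smor S (mkMor (eta Y))) by exact (proj2 (hc _ _ (eta Y) HsY (Hi Y))).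
    assert (E : comp (eta Y) (comp (Fm X Y f) gX) = Gm X Y f).
    { rewrite compA, Hn, <- compA, HX2, comp1r. reflexivity. }
    rewrite <- E. apply Hcomp; [apply Hcomp; assumption | assumption].
  - destruct (Hsm _ Hf) as [HsX HsY]. cbn in HsX, HsY.
    assert (HFX : sob S (F X)) by (apply Hob; exact HsX).
    assert (hinv : smor S (mkMor gY)).
    { refine (proj2 (hc _ _ gY HsY _)). exists (eta Y); split; assumption. }
    assert (heta : smor S (mkMor (eta X))) by exact (proj2 (hc _ _ (eta X) HFX (Hi X))).
    assert (E : comp gY (comp (Gm X Y f) (eta X)) = Fm X Y f).
    { rewrite <- Hn, compA, HY1, comp1l. reflexivity. }
    rewrite <- E. apply Hcomp; [apply Hcomp; assumption | assumption].
Qed.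

Lemma closure_subcat (C : Category) (D : subcat C) : is_subcat (closure D).
Proof.
  split; [|split].
  - intros m Hm; split; intros S HS Hc Hi; apply (proj1 HS m (Hm S HS Hc Hi)).
  - intros X HX S HS Hc Hi. apply (proj1 (proj2 HS)). apply HX; assumption.
  - intros X Y Z g f Hf Hg S HS Hc Hi. apply (proj2 (proj2 HS)).
    + apply Hf; assumption.
    + apply Hg; assumption.
Qed.

Lemma closure_closed (C : Category) (D : subcat C) : closed_iso (closure D).
Proof.
  intros X X' phi HX Hphi. split; intros S HS Hc Hi; apply (Hc X X' phi (HX S HS Hc Hi) Hphi).
Qed.

Lemma closure_min (C : Category) (D S : subcat C) :
  is_subcat S -> closed_iso S -> incl D S -> incl (closure D) S.
Proof. intros HS Hc Hi. split; intros x Hx; apply Hx; assumption. Qed.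

Lemma closure_incl (C : Category) (D : subcat C) : incl D (closure D).
Proof. split; intros x H S HS Hc Hi; apply Hi; exact H. Qed.

Lemma inter_subcat (C : Category) (D E : subcat C) :
  is_subcat D -> is_subcat E -> is_subcat (inter D E).
Proof.
  intros [D1 [D2 D3]] [E1 [E2 E3]]. split; [|split].
  - intros m [H1 H2]. destruct (D1 m H1), (E1 m H2). split; split; assumption.
  - intros X [H1 H2]. split; auto.
  - intros X Y Z g f [H1 H2] [H3 H4]. split; auto.
Qed.

Lemma inter_closed (C : Category) (D E : subcat C) :
  closed_iso D -> closed_iso E -> closed_iso (inter D E).
Proof.
  intros HD HE X X' phi [H1 H2] Hphi.
  destruct (HD X X' phi H1 Hphi), (HE X X' phi H2 Hphi). split; split; assumption.
Qed.

Lemma closure_map (C : Category) (F : Functor C) (D E : subcat C) :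
  is_subcat E -> closed_iso E ->
  (forall X, sob D X -> sob E (F X)) -> (forall m, smor D m -> smor E (fmor F m)) ->
  (forall X, sob (closure D) X -> sob E (F X)) /\
  (forall m, smor (closure D) m -> smor E (fmor F m)).
Proof.
  intros HE Hc Hob Hmor.
  pose (S := {| sob X := sob E (F X); smor m := smor E (fmor F m) |}).
  assert (HS : is_subcat S).
  { destruct HE as [E1 [E2 E3]]. split; [|split].
    - intros m Hm. exact (E1 _ Hm).
    - intros X HX. change (smor E (fmor F (mkMor (idm X)))).
      rewrite fmor_mk, fmap_id. apply E2. exact HX.
    - intros X Y Z g f Hf Hg. change (smor E (fmor F (mkMor (comp g f)))).
      change (smor E (fmor F (mkMor f))) in Hf. change (smor E (fmor F (mkMor g))) in Hg.
      rewrite fmor_mk in *. rewrite fmap_comp. apply E3; assumption. }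
  assert (HcS : closed_iso S).
  { intros X X' phi HX Hphi.
    destruct (Hc _ _ (fmap F phi) HX (@fmap_iso _ F _ _ phi Hphi)) as [H1 H2]. split; assumption. }
  assert (HiS : incl D S) by (split; assumption).
  split.
  - intros X HX. exact (HX S HS HcS HiS).
  - intros m Hm. exact (Hm S HS HcS HiS).
Qed.

Section Act.
End Act.

Lemma act_id_transport (G : Group) (C : SemigroupalCategory) (T : GroupAction G C)
  (S : subcat C) (hS : is_subcat S) (hc : closed_iso S) :
  (forall X, sob S (act T (gone G) X) <-> sob S X) /\
  (forall X Y (f : hom X Y), smor S (mkMor (fmap (act T (gone G)) f)) <-> smor S (mkMor f)).
Proof.
  destruct (transport hS hc (proj1 (unt_sg_iso T))) as [H1 H2].
  split; intros; symmetry; [apply H1 | apply H2].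
Qed.

Lemma act_comp_transport (G : Group) (C : SemigroupalCategory) (T : GroupAction G C)
  (a b : G) (S : subcat C) (hS : is_subcat S) (hc : closed_iso S) :
  (forall X, sob S (act T a (act T b X)) <-> sob S (act T (gmul a b) X)) /\
  (forall X Y (f : hom X Y), smor S (mkMor (fmap (act T a) (fmap (act T b) f)))
                             <-> smor S (mkMor (fmap (act T (gmul a b)) f))).
Proof.
  exact (transport hS hc (proj1 (gam_sg_iso T a b))).
Qed.

Lemma act_inv_transport (G : Group) (C : SemigroupalCategory) (T : GroupAction G C)
  (a b : G) (E : gmul a b = gone G) (S : subcat C) (hS : is_subcat S) (hc : closed_iso S) :
  (forall X, sob S (act T a (act T b X)) <-> sob S X) /\
  (forall X Y (f : hom X Y), smor S (mkMor (fmap (act T a) (fmap (act T b) f)))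
                             <-> smor S (mkMor f)).
Proof.
  destruct (act_comp_transport T a b hS hc) as [H1 H2].
  rewrite E in H1, H2.
  destruct (act_id_transport T hS hc) as [H3 H4].
  split; intros; [rewrite H1, H3 | rewrite H2, H4]; reflexivity.
Qed.

Lemma K1 (G : Group) (C : SemigroupalCategory) (T : GroupAction G C)
  (I : subcat C) (hS : is_subcat I) (hc : closed_iso I)
  (a b : G) (E : gmul b a = gone G) :
  (forall X, sob (closure (image (act T a) I)) X -> sob I (act T b X)) /\
  (forall m, smor (closure (image (act T a) I)) m -> smor I (fmor (act T b) m)).
Proof.
  destruct (act_inv_transport T E hS hc) as [H1 H2].
  apply closure_map; try assumption.
  - intros X [X0 [HX0 <-]]. apply H1. exact HX0.
  - intros m [[X0 [Y0 f0]] [Hm0 <-]].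
    change (smor I (mkMor (fmap (act T b) (fmap (act T a) f0)))).
    apply H2. exact Hm0.
Qed.

Lemma K2 (G : Group) (C : SemigroupalCategory) (T : GroupAction G C)
  (I : subcat C) (a b k : G) (E : gmul b a = k) :
  (forall X, sob (closure (image (act T a) I)) X ->
             sob (closure (image (act T k) I)) (act T b X)) /\
  (forall m, smor (closure (image (act T a) I)) m ->
             smor (closure (image (act T k) I)) (fmor (act T b) m)).
Proof.
  destruct (act_comp_transport T b a (@closure_subcat _ (image (act T k) I))
              (@closure_closed _ (image (act T k) I))) as [H1 H2].
  rewrite E in H1, H2.
  apply closure_map.
  - apply closure_subcat.
  - apply closure_closed.
  - intros X [X0 [HX0 <-]]. apply H1. apply (proj1 (@closure_incl _ _)).
    exists X0. split; [exact HX0 | reflexivity].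
  - intros m [[X0 [Y0 f0]] [Hm0 <-]].
    change (smor (closure (image (act T k) I)) (mkMor (fmap (act T b) (fmap (act T a) f0)))).
    apply H2. apply (proj2 (@closure_incl _ _)).
    exists (mkMor f0). split; [exact Hm0 | reflexivity].
Qed.

Theorem lemma3p1 (G : Group) (C : SemigroupalCategory) (T : GroupAction G C)
  (I : subcat C) (hI : is_ideal I) :
  let Cg := fun g : G => inter I (closure (image (act T g) I)) in
  eq_sub (Cg (gone G)) I /\
  (forall g h : G,
      incl (image (act T g) (inter (Cg (ginv g)) (Cg h)))
           (inter (Cg g) (Cg (gmul g h)))) /\
  (forall g h : G,
      eq_sub (closure (image (act T g) (inter (Cg (ginv g)) (Cg h))))
             (inter (Cg g) (Cg (gmul g h)))).
Proof.
  intros Cg. subst Cg.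
  destruct hI as [hS [hc _]].
  assert (P2 : forall g h : G,
      incl (image (act T g) (inter (inter I (closure (image (act T (ginv g)) I)))
                                   (inter I (closure (image (act T h) I)))))
           (inter (inter I (closure (image (act T g) I)))
                  (inter I (closure (image (act T (gmul g h)) I))))).
  { intros g h.
    destruct (K1 T hS hc (a := ginv g) (b := g) (@gmulVr G g)) as [A1 A2].
    destruct (K2 T I (a := h) (b := g) (k := gmul g h) eq_refl) as [B1 B2].
    split.
    - intros X [X0 [[[H1 H2] [H3 H4]] <-]].
      split; split.
      + apply A1; exact H2.
      + apply (proj1 (@closure_incl _ _)). exists X0; split; [exact H1 | reflexivity].
      + apply A1; exact H2.
      + apply B1; exact H4.
    - intros m [m0 [[[H1 H2] [H3 H4]] <-]].
      split; split.
      + apply A2; exact H2.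
      + apply (proj2 (@closure_incl _ _)). exists m0; split; [exact H1 | reflexivity].
      + apply A2; exact H2.
      + apply B2; exact H4. }
  split; [|split; [exact P2|]].
  - split.
    + split; intros x [Hx _]; exact Hx.
    + pose proof (@closure_subcat _ (image (act T (gone G)) I)) as HS'.
      pose proof (@closure_closed _ (image (act T (gone G)) I)) as Hc'.
      destruct (act_id_transport T HS' Hc') as [H1 H2].
      split.
      * intros X HX. split; [exact HX|]. apply H1.
        apply (proj1 (@closure_incl _ _)). exists X; split; [exact HX | reflexivity].
      * intros [X [Y f]] Hm. split; [exact Hm|].
        change (smor (closure (image (act T (gone G)) I)) (mkMor f)). apply H2.
        apply (proj2 (@closure_incl _ _)). exists (mkMor f); split; [exact Hm | reflexivity].
  - intros g h. split.
    + apply closure_min.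
      * apply inter_subcat; apply inter_subcat; try assumption; apply closure_subcat.
      * apply inter_closed; apply inter_closed; try assumption; apply closure_closed.
      * apply P2.
    + set (Dn := closure (image (act T g) (inter (inter I (closure (image (act T (ginv g)) I)))
                                   (inter I (closure (image (act T h) I)))))).
      destruct (act_inv_transport T (@gmulVr G g) (@closure_subcat _ (image (act T g) (inter (inter I (closure (image (act T (ginv g)) I))) (inter I (closure (image (act T h) I)))))) (@closure_closed _ _))
        as [H1 H2].
      destruct (K1 T hS hc (a := g) (b := ginv g) (@gmulVl G g)) as [A1 A2].
      assert (Eh : gmul (ginv g) (gmul g h) = h).
      { rewrite gmulA, gmulVl, gmul1l. reflexivity. }
      destruct (K2 T I (a := gmul g h) (b := ginv g) (k := h) Eh) as [B1 B2].
      split.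
      * intros X [[HX1 HX2] [HX3 HX4]].
        apply H1. apply (proj1 (@closure_incl _ _)).
        exists (act T (ginv g) X). split; [|reflexivity].
        split; split.
        -- apply A1; exact HX2.
        -- apply (proj1 (@closure_incl _ _)). exists X; split; [exact HX1 | reflexivity].
        -- apply A1; exact HX2.
        -- apply B1; exact HX4.
      * intros [X [Y f]] [[HX1 HX2] [HX3 HX4]].
        change (smor Dn (mkMor f)). apply H2. apply (proj2 (@closure_incl _ _)).
        exists (mkMor (fmap (act T (ginv g)) f)). split; [|reflexivity].
        split; split.
        -- apply (A2 (mkMor f)); exact HX2.
        -- apply (proj2 (@closure_incl _ _)). exists (mkMor f); split; [exact HX1 | reflexivity].
        -- apply (A2 (mkMor f)); exact HX2.
        -- apply (B2 (mkMor f)); exact HX4.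
Qed.
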